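(* Let $(x,y,z)$ be positive integers with $x\ge2$, $4\le y-x\le 5000$, satisfying $$(x-1)x(x+1)(y-1)y(y+1)=(z-1)z(z+1).$$ Then $(x,y,z)=(F_{2n-1},F_{2n+1},F_{2n}^2)$ for some integer $n\ge1$.
   Context: $F_m$ denotes the $m$-th Fibonacci number: $F_0=0$, $F_1=1$, $F_{m+1}=F_m+F_{m-1}$. The condition $x\ge 2$ excludes the solutions with $x=1$, for which both sides vanish. *)

(* Defs.v *)
From mathcomp Require Import all_boot.

Fixpoint fib (m : nat) : nat :=
  match m with
  | 0 => 0
  | 1 => 1
  | (k.+1 as m').+1 => fib m' + fib k
  end.

(* Main.v *)
From Stdlib Require Import ZArith Lia Bool.
Require Import Defs.
From mathcomp Require Import all_boot zify.

Module ZP.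
Local Open Scope Z_scope.

Definition g (z : Z) : Z := z*z*z - z.

Lemma g_mono a b : a <= b -> g a <= g b.
Proof.
intro H; unfold g.
assert (E : b*b*b - b - (a*a*a - a) = (b-a)*(a*a+a*b+b*b-1)) by ring.
destruct (Z.eq_dec a b) as [->|Hne]; [lia|].
assert (a*a+b*b >= 1).
{ destruct (Z.eq_dec a 0) as [->|na]; [nia|]. assert (a*a >= 1) by nia. nia. }
assert (a*a+a*b+b*b >= 1) by nia.
assert (b - a >= 1) by lia.
nia.
Qed.

Lemma g_smono a b : 1 <= a -> a < b -> g a < g b.
Proof.
intros Ha H; unfold g.
assert (E : b*b*b - b - (a*a*a - a) = (b-a)*(a*a+a*b+b*b-1)) by ring.
assert (Q: a*a+a*b+b*b-1 >= 1) by nia.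
assert ((b-a)*(a*a+a*b+b*b-1) >= 1) by nia.
lia.
Qed.

Lemma sep_false c R z : g c < R -> R < g (c+1) -> g z = R -> False.
Proof.
intros H1 H2 H3.
destruct (Z.le_gt_cases z c) as [H|H].
- pose proof (g_mono _ _ H); lia.
- assert (c+1 <= z) by lia. pose proof (g_mono _ _ H0); lia.
Qed.

Definition sep R c := (g c <? R) && (R <? g (c+1)).

Lemma sep_ok R c z : sep R c = true -> g z = R -> False.
Proof.
unfold sep; move/andP=> [/Z.ltb_lt H1 /Z.ltb_lt H2]; eapply sep_false; eauto.
Qed.

Lemma cube_le a b : 0 <= a <= b -> a*a*a <= b*b*b.
Proof.
intros [H1 H2].
assert (a*a <= b*b) by (apply Z.mul_le_mono_nonneg; lia).
apply Z.mul_le_mono_nonneg; try lia; apply Z.mul_nonneg_nonneg; lia.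
Qed.

Lemma cube_lt a b : 0 <= a < b -> a*a*a < b*b*b.
Proof.
intros [H1 H2].
assert (a*a <= b*b) by (apply Z.mul_le_mono_nonneg; lia).
assert (0 < b*b) by (apply Z.mul_pos_pos; lia).
assert (a*a*a <= b*b*a) by (apply Z.mul_le_mono_nonneg_r; lia).
assert (b*b*a < b*b*b) by (apply Z.mul_lt_mono_pos_l; lia).
lia.
Qed.

Definition phi (x t y : Z) : Z := t*t*t - t - x*y*(x*x+y*y+3*t*t-2-3*t*x*y).

Lemma phi_mono x t a b : 1 <= x -> 1 <= t -> 2*t*x <= a -> a <= b -> phi x t b <= phi x t a.
Proof.
intros Hx Ht Ha Hb.
assert (E: phi x t a - phi x t b = x*(b-a)*(3*(t*x)*((a-2*t*x)+(b-2*t*x)) + (a-2*t*x)*(a-2*t*x) + (a-2*t*x)*(b-2*t*x) + (b-2*t*x)*(b-2*t*x) + x*x + 3*t*t - 2)) by (unfold phi; ring).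
assert (B: 0 <= 3*(t*x)*((a-2*t*x)+(b-2*t*x)) + (a-2*t*x)*(a-2*t*x) + (a-2*t*x)*(b-2*t*x) + (b-2*t*x)*(b-2*t*x) + x*x + 3*t*t - 2).
{ assert (0 <= t*x) by nia. assert (0 <= (a-2*t*x)*(b-2*t*x)) by nia.
  assert (0 <= 3*(t*x)*((a-2*t*x)+(b-2*t*x))) by nia. nia. }
assert (0 <= x*(b-a)) by nia.
assert (0 <= x*(b-a)*(3*(t*x)*((a-2*t*x)+(b-2*t*x)) + (a-2*t*x)*(a-2*t*x) + (a-2*t*x)*(b-2*t*x) + (b-2*t*x)*(b-2*t*x) + x*x + 3*t*t - 2)) by (apply Z.mul_nonneg_nonneg; lia).
lia.
Qed.

Lemma theory_t2 x y z : 2 <= x -> x < y -> 1 <= z ->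
  g z = (x*x*x-x)*(y*y*y-y) -> 3*(x*y) < x*x+y*y+1 ->
  exists t, 2 <= t /\ 507*t*x < 388*y /\ 2*t*x <= y /\ phi x t y = 0 /\
    130323843*(x*x*x*x) < 58411072*(y*y).
Proof.
intros Hx Hy1 Hz Hg Hgt.
assert (HP: x*y > 0) by (apply Z.lt_gt, Z.mul_pos_pos; lia).
  assert (E1: (x*x*x-x)*(y*y*y-y) - g (x*y-1) = (x*y)*(3*(x*y) - (x*x+y*y) - 1)) by (unfold g; ring).
  assert (HQ: (x*x+y*y) + 1 - 3*(x*y) > 0) by lia.
  assert (HPQ: (x*y)*((x*x+y*y) + 1 - 3*(x*y)) > 0) by (apply Z.lt_gt, Z.mul_pos_pos; lia).
  assert (E1': (x*y)*(3*(x*y) - (x*x+y*y) - 1) = - ((x*y)*((x*x+y*y) + 1 - 3*(x*y)))) by ring.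
  assert (Hzle: z <= x*y - 2).
  { destruct (Z.le_gt_cases z (x*y-2)) as [h|h]; auto.
    assert (x*y-1 <= z) by lia. pose proof (g_mono _ _ H). lia. }
  assert (E3: (x*y)*(x*x+y*y-2) - (3*(x*y)*(x*y-z)*z + (x*y-z)*(x*y-z)*(x*y-z) - (x*y-z))
              = g z - (x*x*x-x)*(y*y*y-y)) by (unfold g; ring).
  remember (x*y - z) as t eqn:Ht.
  assert (Ht2: t >= 2) by lia.
  assert (Ek: (x*y)*(x*x+y*y-2-3*t*z) = (x*y)*(x*x+y*y-2) - 3*(x*y)*t*z) by ring.
  assert (Hid: t*t*t - t = (x*y)*(x*x+y*y-2-3*t*z)) by lia.
  assert (Ht3: t*t*t - t >= 6) by (clear - Ht2; nia).
  assert (Hk: x*x+y*y-2-3*t*z >= 1).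
  { destruct (Z.le_gt_cases (x*x+y*y-2-3*t*z) 0) as [h|h]; [|lia].
    assert ((x*y)*(x*x+y*y-2-3*t*z) <= 0) by (clear -HP h; nia). lia. }
  assert (HtP: t*t*t - t >= x*y) by (rewrite Hid; clear -HP Hk; nia).
  assert (Htz: 3*t*z <= x*x+y*y-3) by lia.
  assert (Ha: 2*(x*x*x-x) >= x*x*x) by (clear -Hx; nia).
  assert (Hb: 2*(y*y*y-y) >= y*y*y) by (clear -Hx Hy1; nia).
  assert (Hab: 4*((x*x*x-x)*(y*y*y-y)) >= (x*y)*(x*y)*(x*y)).
  { assert (E: (x*y)*(x*y)*(x*y) = (x*x*x)*(y*y*y)) by ring.
    assert (0 <= x*x*x) by (clear -Hx; nia). assert (0 <= y*y*y) by (clear -Hx Hy1; nia).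
    assert ((2*(x*x*x-x))*(2*(y*y*y-y)) >= (x*x*x)*(y*y*y)) by (clear -Ha Hb H H0; nia).
    lia. }
  assert (H2z: 2*z >= x*y).
  { destruct (Z.le_gt_cases (x*y) (2*z)) as [h|h]; [lia|].
    assert (h1: 0 <= 2*z <= x*y - 1) by lia.
    assert (8*(z*z*z) <= (x*y-1)*(x*y-1)*(x*y-1)).
    { assert (E: 8*(z*z*z) = (2*z)*(2*z)*(2*z)) by ring. rewrite E.
      apply cube_le; lia. }
    assert ((x*y-1)*(x*y-1)*(x*y-1) < (x*y)*(x*y)*(x*y)) by (apply cube_lt; lia).
    unfold g in Hg. lia. }
  assert (H3t: 3*t*(x*y) < 2*(x*x+y*y)) by (clear -Htz H2z Ht2; nia).
  assert (Hxy: x < y) by lia.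
  assert (H3: 3*(x*y) < x*x+y*y) by (clear -H3t Ht2 HP; nia).
  assert (H13: 13*x < 5*y).
  { destruct (Z.le_gt_cases (5*y) (13*x)) as [h|h]; [|lia].
    assert ((5*y-13*x)*(y-x) <= 0) by (clear -h Hxy; nia).
    clear -H H3 h Hxy Hx. nia. }
  assert (H169: 169*(x*x) < 25*(y*y)) by (clear -H13 Hx; nia).
  assert (H507: 507*t*x < 388*y).
  { assert (169*(3*t*(x*y)) < 388*(y*y)) by lia.
    clear -H Hx Hxy. nia. }
  assert (Hcube: (507*t*x)*(507*t*x)*(507*t*x) < (388*y)*(388*y)*(388*y)).
  { assert (0 <= 507*t*x) by (clear -Ht2 Hx; nia). apply cube_lt; lia. }
  assert (E4: (507*t*x)*(507*t*x)*(507*t*x) = 130323843*(x*x*x)*(t*t*t)) by ring.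
  assert (E5: (388*y)*(388*y)*(388*y) = 58411072*(y*y*y)) by ring.
  assert (Ht3b: t*t*t >= x*y) by lia.
  assert (H27: 130323843*(x*x*x)*(x*y) <= 130323843*(x*x*x)*(t*t*t)).
  { assert (0 <= 130323843*(x*x*x)) by (clear -Hx; nia). clear -Ht3b H. nia. }
  assert (H27b: 130323843*(x*x*x*x)*y < 58411072*(y*y)*y).
  { assert (E6: 130323843*(x*x*x)*(x*y) = 130323843*(x*x*x*x)*y) by ring.
    assert (E7: 58411072*(y*y*y) = 58411072*(y*y)*y) by ring. lia. }
  assert (H4: 130323843*(x*x*x*x) < 58411072*(y*y)) by (clear -H27b Hx Hy1; nia).
  assert (Ez: x*x+y*y-2-3*t*z = x*x+y*y+3*t*t-2-3*t*x*y).
  { replace z with (x*y - t) by lia. ring. }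
  rewrite Ez in Hid Hk.
  assert (Hphi: phi x t y = 0) by (unfold phi; lia).
  assert (H2t: 2*t*x <= y).
  { destruct (Z.le_gt_cases (2*t*x) y) as [h|h]; [exact h|exfalso].
    assert (Eu: (3*t*x - y)*y = x*x + 3*t*t - 2 - (x*x+y*y+3*t*t-2-3*t*x*y)) by ring.
    assert (Hu1: t*x + 1 <= 3*t*x - y) by lia.
    assert (Hu2: (t*x+1)*y <= (3*t*x - y)*y) by (apply Z.mul_le_mono_nonneg_r; lia).
    assert (Hu3: t*x*y < x*x + 3*t*t) by (clear -Hu2 Eu Hk Hxy Hx; nia).
    assert (Htx: 0 < t*x) by (apply Z.mul_pos_pos; lia).
    assert (Hu4a: (13*x)*(t*x) < (5*y)*(t*x)) by (apply Z.mul_lt_mono_pos_r; lia).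
    assert (Hu4b: 26*(x*x) <= 13*x*(t*x)) by (clear -Ht2 Hx; nia).
    assert (Hu4: 26*(x*x) < 5*(t*x*y)).
    { assert (E: (5*y)*(t*x) = 5*(t*x*y)) by ring. lia. }
    assert (Hu5a: t*(21*(x*y)) < t*(78*t)).
    { assert (F1: t*(21*(x*y)) = 21*(t*x*y)) by ring. assert (F2: t*(78*t) = 78*(t*t)) by ring. lia. }
    assert (Hu5: 21*(x*y) < 78*t) by (apply (proj2 (Z.mul_lt_mono_pos_l t _ _ ltac:(lia))); exact Hu5a).
    assert (Hu6a: (21*(x*y))*(507*x) < (78*t)*(507*x)) by (apply Z.mul_lt_mono_pos_r; lia).
    assert (Hu6b: 39546*(t*x) < 30264*y) by lia.
    assert (F3: (21*(x*y))*(507*x) = 10647*(x*x)*y) by ring.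
    assert (F4: (78*t)*(507*x) = 39546*(t*x)) by ring.
    assert (Hu6: (10647*(x*x))*y < 30264*y) by lia.
    assert (Hu7: 10647*(x*x) < 30264) by (apply (proj2 (Z.mul_lt_mono_pos_r y _ _ ltac:(lia))); exact Hu6).
    clear -Hu7 Hx; nia. }
  exists t. repeat split; lia.
Qed.

Lemma lt_case x y z : 2 <= x -> x < y -> x*x+y*y+1 < 3*(x*y) ->
  g z = (x*x*x-x)*(y*y*y-y) -> False.
Proof.
intros Hx Hy Hc Hg.
  assert (HP: x*y > 0) by (apply Z.lt_gt, Z.mul_pos_pos; lia).
  assert (E1: (x*x*x-x)*(y*y*y-y) - g (x*y-1) = (x*y)*(3*(x*y) - (x*x+y*y) - 1)) by (unfold g; ring).
  assert (E2: g (x*y-1+1) - (x*x*x-x)*(y*y*y-y) = (x*y)*(x*x+y*y-2)) by (unfold g; ring).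
  assert (HQ: 3*(x*y) - (x*x+y*y) - 1 > 0) by lia.
  assert (HPQ: (x*y)*(3*(x*y) - (x*x+y*y) - 1) > 0) by (apply Z.lt_gt, Z.mul_pos_pos; lia).
  assert (HQ2: x*x+y*y-2 > 0) by (clear -Hx Hy; nia).
  assert (HPQ2: (x*y)*(x*x+y*y-2) > 0) by (apply Z.lt_gt, Z.mul_pos_pos; lia).
  apply (sep_false (x*y-1) ((x*x*x-x)*(y*y*y-y)) z); [lia|lia|exact Hg].
Qed.

Definition sepphi (x t y0 : Z) : bool :=
  (2*t*x <=? y0) && (0 <? phi x t y0) && (phi x t (y0+1) <? 0).

Definition checkt (x t : Z) : bool :=
  (0 <? phi x t (x+5000)) ||
  (let q := (x*x+3*t*t-2) / (3*t*x) in
   let y1 := 3*t*x - q in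
   let k1 := (t*t*t-t) / (x*y1) in
   let y2 := 3*t*x - (x*x+3*t*t-2-k1) / y1 in
   let k2 := (t*t*t-t) / (x*y2) in
   let y3 := 3*t*x - (x*x+3*t*t-2-k2) / y2 in
   sepphi x t (y3-1) || sepphi x t (y3-2) || sepphi x t y3 || sepphi x t (y3-3) || sepphi x t (y3+1)).

Lemma sepphi_ok x t y0 y : 1 <= x -> 1 <= t -> sepphi x t y0 = true -> 2*t*x <= y -> phi x t y = 0 -> False.
Proof.
intros Hx Ht Hs Hy Hp. unfold sepphi in Hs.
move/andP: Hs => [/andP [/Z.leb_le H1 /Z.ltb_lt H2] /Z.ltb_lt H3].
destruct (Z.le_gt_cases y y0) as [h|h].
- pose proof (phi_mono x t y y0 Hx Ht Hy h). lia.
- pose proof (phi_mono x t (y0+1) y Hx Ht ltac:(lia) ltac:(lia)). lia.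
Qed.

Lemma checkt_ok x t y : 1 <= x -> 1 <= t -> checkt x t = true -> 2*t*x <= y -> y <= x + 5000 -> phi x t y = 0 -> False.
Proof.
intros Hx Ht Hc Hy1 Hy2 Hp. unfold checkt in Hc.
move/orP: Hc => [/Z.ltb_lt Hc|Hc].
- pose proof (phi_mono x t y (x+5000) Hx Ht Hy1 Hy2). lia.
- cbv zeta in Hc. repeat (move/orP: Hc => [Hc|Hc]); exact (sepphi_ok x t _ y Hx Ht Hc Hy1 Hp).
Qed.

Fixpoint loopt (x t : Z) (n : nat) : bool :=
  match n with O => true | S n' => checkt x t && loopt x (t+1) n' end.
Definition tmax (x : Z) : Z := (388*(x+5000)) / (507*x).
Fixpoint loopx (x : Z) (n : nat) : bool :=
  match n with O => true | S n' => loopt x 2 (Z.to_nat (tmax x)) && loopx (x+1) n' end.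

Lemma loopt_spec x n : forall t0, loopt x t0 n = true ->
  forall t, t0 <= t < t0 + Z.of_nat n -> checkt x t = true.
Proof.
induction n as [|n IH]; intros t0 H t Ht; [cbn [Z.of_nat] in Ht; lia|].
rewrite Nat2Z.inj_succ in Ht. cbn [loopt] in H.
move/andP: H => [H1 H2].
destruct (Z.eq_dec t t0) as [->|ne]; auto.
apply (IH (t0+1)); auto; lia.
Qed.

Lemma loopx_spec n : forall x0, loopx x0 n = true ->
  forall x, x0 <= x < x0 + Z.of_nat n -> loopt x 2 (Z.to_nat (tmax x)) = true.
Proof.
induction n as [|n IH]; intros x0 H x Hx; [cbn [Z.of_nat] in Hx; lia|].
rewrite Nat2Z.inj_succ in Hx. cbn [loopx] in H.
move/andP: H => [H1 H2].
destruct (Z.eq_dec x x0) as [->|ne]; auto.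
apply (IH (x0+1)); auto; lia.
Qed.

Lemma all_ok : loopx 2 57 = true.
Proof. vm_cast_no_check (eq_refl true). Qed.

Lemma allZ x y z : 2 <= x -> x + 4 <= y -> y <= x + 5000 -> 1 <= z ->
  g z = (x*x*x-x)*(y*y*y-y) -> x*x+y*y+1 = 3*(x*y).
Proof.
intros Hx Hy1 Hy2 Hz Hg.
destruct (Z.lt_total (x*x+y*y+1) (3*(x*y))) as [Hlt|[Heq|Hgt]]; [| exact Heq |].
- exfalso; exact (lt_case x y z Hx ltac:(lia) Hlt Hg).
- exfalso.
  destruct (theory_t2 x y z Hx ltac:(lia) Hz Hg Hgt) as [t [Ht2 [H507 [H2t [Hphi H4]]]]].
  destruct (Z.le_gt_cases x 58) as [h|h].
  + assert (Htm: t <= tmax x).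
    { unfold tmax. apply Z.div_le_lower_bound; [lia|].
      assert (507*x*t = 507*t*x) by ring. lia. }
    assert (Hl := loopx_spec 57 2 all_ok x ltac:(lia)).
    assert (Hc := loopt_spec x _ 2 Hl t ltac:(rewrite Z2Nat.id; [lia| unfold tmax; apply Z.div_pos; lia])).
    exact (checkt_ok x t y ltac:(lia) ltac:(lia) Hc H2t Hy2 Hphi).
  + assert (x*x >= 3481) by (clear -h; nia).
    assert (Hx4: x*x*x*x >= 3481*(x*x)) by (clear -H; nia).
    assert (Hy: 59*y <= 5059*x) by lia.
    assert (3481*(y*y) <= 25593481*(x*x)) by (clear -Hy h Hy1; nia).
    lia.
Qed.

End ZP.

Lemma fib_SS k : fib k.+2 = fib k.+1 + fib k.
Proof. by []. Qed.

Lemma fib_3 k : fib (k+4) + fib k = 3 * fib (k+2).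
Proof.
have -> : k + 4 = k.+4 by lia. have -> : k + 2 = k.+2 by lia.
rewrite !fib_SS. lia.
Qed.

Lemma cass m : fib (2*m+1) ^ 2 = fib (2*m) ^ 2 + fib (2*m) * fib (2*m+1) + 1.
Proof.
elim: m => [|m IH]; first by [].
have -> : 2 * m.+1 + 1 = (2*m+1).+2 by lia.
have -> : 2 * m.+1 = (2*m).+2 by lia.
rewrite !fib_SS.
have -> : (2*m+1).+1 = (2*m).+2 by lia.
rewrite fib_SS.
have -> : (2*m).+1 = 2*m+1 by lia.
move: IH; set a := fib (2*m); set b := fib (2*m+1) => IH.
nia.
Qed.

Lemma descent N : forall x y : Z, (0 < x < y)%Z -> (y <= Z.of_nat N)%Z ->
  (x*x+y*y+1 = 3*(x*y))%Z ->
  exists m, x = Z.of_nat (fib (2*m+1)) /\ y = Z.of_nat (fib (2*m+3)).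
Proof.
elim: N => [|N IH] x y Hxy HN He; first lia.
have [Hx1|Hx2] : (x = 1)%Z \/ (2 <= x)%Z by lia.
- subst x. exists 0%N. split; first by [].
  have : ((y - 1) * (y - 2) = 0)%Z by lia.
  move/Z.mul_eq_0 => [] h; [lia|]. have -> : y = 2%Z by lia. by [].
- have Hpos : (0 < 3*x - y)%Z.
  { have E : ((3*x - y) * y = x*x + 1)%Z by lia.
    nia. }
  have Hlt : (3*x - y < x)%Z.
  { have E : ((3*x - y) * y = x*x + 1)%Z by lia.
    nia. }
  have He' : ((3*x-y)*(3*x-y) + x*x + 1 = 3*((3*x-y)*x))%Z by nia.
  have [m [h1 h2]] := IH (3*x-y)%Z x ltac:(lia) ltac:(lia) He'.
  exists m.+1. split.
  + rewrite h2. congr Z.of_nat. congr fib. lia.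
  + have F := fib_3 (2*m+1).
    have -> : 2 * m.+1 + 3 = 2*m+1+4 by lia.
    have E2 : 2*m+3 = 2*m+1+2 by lia. rewrite E2 in h2.
    lia.
Qed.

Theorem corollary2 (x y z : nat) :
  0 < x -> 0 < y -> 0 < z ->
  2 <= x ->
  x + 4 <= y -> y <= x + 5000 ->
  (x - 1) * x * (x + 1) * ((y - 1) * y * (y + 1)) = (z - 1) * z * (z + 1) ->
  exists n : nat, 1 <= n /\
    x = fib (2 * n - 1) /\ y = fib (2 * n + 1) /\ z = fib (2 * n) ^ 2.
Proof.
move=> hx0 hy0 hz0 hx hy1 hy2 H.
have HZ : (ZP.g (Z.of_nat z) = (Z.of_nat x * Z.of_nat x * Z.of_nat x - Z.of_nat x) *
      (Z.of_nat y * Z.of_nat y * Z.of_nat y - Z.of_nat y))%Z.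
{ have HZ' := congr1 Z.of_nat H.
  rewrite !Nat2Z.inj_mul !Nat2Z.inj_add in HZ'.
  rewrite !Nat2Z.inj_sub in HZ'; try (apply/leP; lia).
  rewrite /ZP.g. move: HZ'. cbn [Z.of_nat].
  set a := Z.of_nat x. set b := Z.of_nat y. set c := Z.of_nat z. move=> HZ'.
  have E : (c*c*c - c = (c - 1)*c*(c+1))%Z by ring.
  rewrite E -HZ'. ring. }
have Hk := ZP.allZ (Z.of_nat x) (Z.of_nat y) (Z.of_nat z) ltac:(lia) ltac:(lia) ltac:(lia) ltac:(lia) HZ.
have [m [hm1 hm2]] := descent (y) (Z.of_nat x) (Z.of_nat y) ltac:(lia) ltac:(lia) Hk.
have Hz : Z.of_nat z = (Z.of_nat x * Z.of_nat y - 1)%Z.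
{ have E : (ZP.g (Z.of_nat x * Z.of_nat y - 1) = (Z.of_nat x * Z.of_nat x * Z.of_nat x - Z.of_nat x) *
      (Z.of_nat y * Z.of_nat y * Z.of_nat y - Z.of_nat y))%Z.
  { have E2 : (ZP.g (Z.of_nat x * Z.of_nat y - 1) - (Z.of_nat x * Z.of_nat x * Z.of_nat x - Z.of_nat x) *
      (Z.of_nat y * Z.of_nat y * Z.of_nat y - Z.of_nat y) = (Z.of_nat x * Z.of_nat y) * ((Z.of_nat x * Z.of_nat x + Z.of_nat y * Z.of_nat y + 1) - 3 * (Z.of_nat x * Z.of_nat y)))%Z
      by (rewrite /ZP.g; ring).
    rewrite Hk Z.sub_diag Z.mul_0_r in E2. lia. }
  have hxZ : (2 <= Z.of_nat x)%Z by lia.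
  have hyZ : (6 <= Z.of_nat y)%Z by lia.
  have HP : (2 <= Z.of_nat x * Z.of_nat y - 1)%Z by (clear -hxZ hyZ; nia).
  have [h|[h|h]] := Z.lt_total (Z.of_nat z) (Z.of_nat x * Z.of_nat y - 1).
  - have hz1 : (1 <= Z.of_nat z)%Z by lia. have := ZP.g_smono _ _ hz1 h. lia.
  - exact h.
  - have hz1 : (1 <= Z.of_nat x * Z.of_nat y - 1)%Z by lia. have := ZP.g_smono _ _ hz1 h. lia. }
have Hx' : x = fib (2*m+1) by lia.
have Hy' : y = fib (2*m+3) by lia.
exists m.+1. split; first by [].
have -> : 2 * m.+1 - 1 = 2*m+1 by lia.
have -> : 2 * m.+1 + 1 = 2*m+3 by lia.
have -> : 2 * m.+1 = (2*m).+2 by lia.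
split; first exact Hx'. split; first exact Hy'.
have C := cass m.
have F1 : fib (2*m+3) = fib (2*m+1) + fib (2*m+2).
{ have -> : 2*m+3 = (2*m+1).+2 by lia. rewrite fib_SS. have -> : (2*m+1).+1 = 2*m+2 by lia. lia. }
have F2 : fib (2*m).+2 = fib (2*m+1) + fib (2*m).
{ rewrite fib_SS. have -> : (2*m).+1 = 2*m+1 by lia. by []. }
have F3 : 2*m+2 = (2*m).+2 by lia.
rewrite F3 in F1.
rewrite F2. rewrite F2 in F1. subst x y.
move: Hz C F1. set a := fib (2*m). set b := fib (2*m+1). set c := fib (2*m+3).
move=> Hz C F1. nia.
Qed.
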